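(* For any formal power series $\tau({\bf t})$ in ${\bf t}=(t_1,t_2,\dots)$ and any $n\ge1$, \[ W_n(x_1,\dots,x_n)=[\epsilon_1\cdots\epsilon_n]\Big(K_n(x_1,\dots,x_n;x_1-\epsilon_1,\dots,x_n-\epsilon_n)\Big/\det\Big(\frac1{x_i-x_j+\epsilon_j}\Big)_{i,j}\Big), \] where $[\epsilon_1\cdots\epsilon_n]$ denotes extraction of the coefficient of $\epsilon_1\cdots\epsilon_n$.
   Context: $[x]=(x,x^2/2,x^3/3,\dots)$ and $\tau(\sum_i[x_i]-\sum_i[x'_i])$ means substituting $t_l=\sum_i(x_i^l-x_i'^l)/l$. $K_n(x_1,\dots,x_n;x'_1,\dots,x'_n)=\det\big(\frac1{x_i-x'_j}\big)_{i,j}\,\tau\big(\sum_i([x_i]-[x'_i])\big)$. $\nabla(x)=\sum_{i\ge1}x^{i-1}\partial/\partial t_i$ and $W_n(x_1,\dots,x_n)=\prod_{i=1}^n\nabla(x_i)\tau({\bf t})|_{{\bf t}=0}$. *)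

(* Defs.v *)
From HB Require Import structures.
From mathcomp Require Import all_boot all_order all_algebra.
From mathcomp Require Import mpoly.
Set Implicit Arguments. Unset Strict Implicit. Unset Printing Implicit Defensive.
Import Order.TTheory GRing.Theory.
Local Open Scope ring_scope.

(* Formal power series in infinitely many variables t = (t_1, t_2, ...).     *)
(* A multi-index is a function m : nat -> nat, where m k is the exponent of *)
(* t_(k+1) (0-based shift).  Only finitely supported multi-indices are ever *)
(* used; a power series is its coefficient function.                         *)
Definition multi_index := nat -> nat.
Definition fps (R : Type) := multi_index -> R.

Definition mi0 : multi_index := fun _ => 0%N.

Definition mi_incr (m : multi_index) (k : nat) : multi_index :=
  fun j => if j == k then (m j).+1 else m j.

Definition fps_deriv (R : nzRingType) (k : nat) (f : fps R) : fps R :=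
  fun m => (m k).+1%:R * f (mi_incr m k).

Definition fps_at0 (R : Type) (f : fps R) : R := f mi0.

(* W_n(x_1..x_n) = prod_i nabla(x_i) tau |_{t=0}, nabla(x) = sum_{i>=1}      *)
(* x^(i-1) d/dt_i.  Expanding the product, the coefficient of               *)
(* x_1^(a_1) ... x_n^(a_n) is  d/dt_(a_1+1) ... d/dt_(a_n+1) tau |_{t=0}.    *)
(* W_n is given as a power series in x via its coefficient function.         *)
Definition W (R : nzRingType) (n : nat) (tau : fps R) (a : 'X_{1..n}) : R :=
  fps_at0 (foldr (fun i f => fps_deriv (a i) f) tau (enum 'I_n)).

(* Polynomials in the 2n variables x_1..x_n, eps_1..eps_n:                   *)
(* variable lshift n i is x_(i+1), variable rshift n i is eps_(i+1).         *)
Definition xv (R : nzRingType) (n : nat) (i : 'I_n) : {mpoly R[n + n]} :=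
  'X_(lshift n i).
Definition ev (R : nzRingType) (n : nat) (i : 'I_n) : {mpoly R[n + n]} :=
  'X_(rshift n i).

(* The substituted value of t_l (l >= 1) in tau(sum_i [x_i] - [x'_i]) with   *)
(* x'_i = x_i - eps_i :  t_l = sum_i (x_i^l - (x_i - eps_i)^l) / l.          *)
Definition tsub (R : fieldType) (n : nat) (l : nat) : {mpoly R[n + n]} :=
  (l%:R)^-1 *: \sum_(i < n) (xv R i ^+ l - (xv R i - ev R i) ^+ l).

Definition mi_of_ffun (D : nat) (m : {ffun 'I_D -> 'I_D.+1}) : multi_index :=
  fun k => oapp (fun i : 'I_D => nat_of_ord (m i)) 0%N (insub k).

(* The power series G(x, eps) := tau(t_l := tsub l), given by its            *)
(* coefficient function on monomials mu in x, eps.  Since tsub l is          *)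
(* homogeneous of degree l (in particular has no monomial of degree < l),    *)
(* the monomial t^m contributes only to total degree sum_l l*m_l >= |m|;     *)
(* hence the coefficient of a monomial mu of total degree D only receives    *)
(* contributions from multi-indices supported in {t_1..t_D} with exponents   *)
(* <= D, and the (a priori infinite) sum defining the composition reduces    *)
(* to the finite sum below.                                                  *)
Definition tau_subst (R : fieldType) (n : nat) (tau : fps R)
    (mu : 'X_{1..n + n}) : R :=
  let D := mdeg mu in
  \sum_(m : {ffun 'I_D -> 'I_D.+1})
     tau (mi_of_ffun m) *
     (\prod_(k < D) tsub R n k.+1 ^+ (m k))@_mu.

Definition xa_eps (n : nat) (a : 'X_{1..n}) : 'X_{1..n + n} :=
  [multinom (match split i with inl j => a j | inr _ => 1%N end) | i < n + n].

(* Main.v *)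
Require Import Defs.
From HB Require Import structures.
From mathcomp Require Import all_boot all_order all_algebra.
From mathcomp Require Import mpoly.
From Stdlib Require Import FunctionalExtensionality.
Set Implicit Arguments. Unset Strict Implicit. Unset Printing Implicit Defensive.
Import Order.TTheory GRing.Theory.
Local Open Scope ring_scope.
Section LHS.
Variable R : nzRingType.

Lemma mi_incrC (m : multi_index) k k' :
  mi_incr (mi_incr m k) k' = mi_incr (mi_incr m k') k.
Proof.
apply: functional_extensionality => j; rewrite /mi_incr.
by case: (j =P k) => [->|]; case: (k =P k') => [->|] //; case: (j =P k').
Qed.

Lemma derivC k k' (f : fps R) :
  fps_deriv k (fps_deriv k' f) = fps_deriv k' (fps_deriv k f).
Proof.
apply: functional_extensionality => m; rewrite /fps_deriv.
have [->|nkk] := eqVneq k k'; first by [].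
rewrite mi_incrC /mi_incr (negbTE nkk) eq_sym (negbTE nkk).
by rewrite !mulrA -!natrM mulnC.
Qed.

Definition Dl (s : seq nat) (f : fps R) := foldr (fun k g => fps_deriv k g) f s.

Lemma Dl_cons k s f : Dl (k :: s) f = Dl s (fps_deriv k f).
Proof.
elim: s f => [|k' s IH] f //=.
by rewrite -IH /= derivC.
Qed.

Fixpoint Kc (s : seq nat) : nat :=
  if s is k :: s' then ((count_mem k s').+1 * Kc s')%N else 1%N.

Definition Ms (s : seq nat) : multi_index := fun k => count_mem k s.

Lemma Dl_at0 s f : Dl s f mi0 = (Kc s)%:R * f (Ms s).
Proof.
elim: s f => [|k s IH] f; first by rewrite /= mul1r.
rewrite Dl_cons IH /fps_deriv.
have -> : mi_incr (Ms s) k = Ms (k :: s).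
  apply: functional_extensionality => j; rewrite /mi_incr /Ms /=.
  by case: (j =P k) => [->|/eqP]; rewrite ?eqxx // eq_sym => /negbTE ->.
by rewrite /= mulrA -natrM mulnC.
Qed.

End LHS.
Section Gen.
Variables (R : comNzRingType) (N : nat).
Implicit Types (p q : {mpoly R[N]}).

Definition agree (O : pred 'X_{1..N}) p q := forall mu, O mu -> p@_mu = q@_mu.

Variable O : pred 'X_{1..N}.
Hypothesis HO : forall m1 m2, O (m1 + m2)%MM -> O m1.

Lemma agreeM p p' q q' : agree O p p' -> agree O q q' -> agree O (p * q) (p' * q').
Proof.
move=> hp hq mu Omu; rewrite !mcoeffM; apply: eq_bigr => k /eqP E.
have Ok : O (k.1 + k.2)%MM by rewrite -E.
rewrite hp; last exact: HO Ok.
rewrite hq //; apply: (HO (m2 := k.1)); by rewrite addmC.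
Qed.

Lemma agree_prod (I : Type) (r : seq I) (F G : I -> {mpoly R[N]}) :
  (forall i, agree O (F i) (G i)) ->
  agree O (\prod_(i <- r) F i) (\prod_(i <- r) G i).
Proof.
move=> h; apply: (big_ind2 (agree O)).
- by [].
- by move=> x1 x2 y1 y2 h1 h2; apply: agreeM.
- by move=> i _; exact: h.
Qed.

Lemma agree_exp p q k : agree O p q -> agree O (p ^+ k) (q ^+ k).
Proof.
move=> h; elim: k => [|k IH]; first by rewrite !expr0.
by rewrite !exprS; apply: agreeM.
Qed.

End Gen.

Section GenZ.
Variables (R : comNzRingType) (N : nat) (u w : 'I_N).
Implicit Types (p q : {mpoly R[N]}).

Definition Zp p := forall r : 'X_{1..N}, r w = 0%N -> (0 < r u)%N -> p@_r = 0.

Lemma ZpM p q : Zp p -> Zp q -> Zp (p * q).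
Proof.
move=> hp hq r rw ru; rewrite mcoeffM big1 // => k /eqP E.
have rw' : (k.1 + k.2)%MM w = 0%N by rewrite -E.
have ru' : (0 < (k.1 + k.2)%MM u)%N by rewrite -E.
move: rw' ru'; rewrite !mnmDE => /eqP; rewrite addn_eq0 => /andP[/eqP h1 /eqP h2].
rewrite addn_gt0 => /orP[h|h]; first by rewrite hp // mul0r.
by rewrite hq // mulr0.
Qed.

Lemma Zp1 : Zp 1.
Proof.
move=> r rw ru; rewrite mcoeff1; case: eqP => // r0.
by move: ru; rewrite r0 mnm0E.
Qed.

Lemma Zp_prod (I : Type) (r : seq I) (F : I -> {mpoly R[N]}) :
  (forall i, Zp (F i)) -> Zp (\prod_(i <- r) F i).
Proof.
move=> h; apply: (big_ind Zp) => //; [exact: Zp1 | exact: ZpM].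
Qed.

Lemma Zp_exp p k : Zp p -> Zp (p ^+ k).
Proof.
move=> h; elim: k => [|k IH]; first by rewrite expr0; exact: Zp1.
by rewrite exprS; apply: ZpM.
Qed.

End GenZ.
Section Spec.
Variables (R : fieldType) (n : nat).

Definition Vk (k : nat) : {mpoly R[n + n]} :=
  \sum_(j < n) 'X_[(U_(lshift n j) *+ k + U_(rshift n j))%MM].

Lemma dV (i : 'I_n) k :
  (Vk k)^`M(rshift n i) = 'X_[(U_(lshift n i) *+ k)%MM].
Proof.
rewrite /Vk raddf_sum (bigD1 i) //= big1 ?addr0.
  rewrite mderivX mnmDE mulmnE !mnm1E eq_lrshift eqxx mul0n add0n scale1r.
  by rewrite addmK.
move=> j nji; rewrite mderivX mnmDE mulmnE !mnm1E eq_lrshift eq_rshift.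
by rewrite (negbTE nji) mul0n scale0r.
Qed.

Lemma dVexp i k p : ((Vk k) ^+ p)^`M(rshift n i) =
  ('X_[(U_(lshift n i) *+ k)%MM] * Vk k ^+ p.-1) *+ p.
Proof.
elim: p => [|p IH]; first by rewrite expr0 -mpolyC1 mderivC mulr0n.
rewrite exprS mderivM dV IH; case: p IH => [|p] IH /=.
  by rewrite mulr0n mulr0 addr0 expr0.
by rewrite mulrnAr mulrCA -exprS [in RHS]mulrS.
Qed.

Definition PF B (F : nat -> nat) := \prod_(k < B) Vk k ^+ F k.
Definition decF (F : nat -> nat) (k : nat) : nat -> nat :=
  fun j => if j == k then (F j).-1 else F j.

Lemma PF_rec B G : PF B.+1 G = PF B G * Vk B ^+ G B.
Proof. by rewrite /PF big_ord_recr. Qed.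

Lemma dPF i B F : (PF B F)^`M(rshift n i) =
  \sum_(k < B) ('X_[(U_(lshift n i) *+ k)%MM] * PF B (decF F k)) *+ F k.
Proof.
elim: B => [|B IH].
  by rewrite /PF !big_ord0 -mpolyC1 mderivC.
rewrite PF_rec mderivM IH dVexp big_ord_recr /=.
have e1 : forall k : 'I_B, decF F k B = F B.
  move=> k; rewrite /decF; case: eqP => // hB.
  by move: (ltn_ord k); rewrite -hB ltnn.
have e2 : PF B (decF F B) = PF B F.
  by apply: eq_bigr => k _; rewrite /decF (ltn_eqF (ltn_ord k)).
rewrite PF_rec e2 {3}/decF eqxx.
under [in RHS]eq_bigr do rewrite PF_rec e1.
rewrite mulr_suml; congr (_ + _).
  by apply: eq_bigr => k _; rewrite mulrnAl mulrA.
by rewrite mulrnAr mulrCA mulrA.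
Qed.

Lemma ZV i k : Zp (lshift n i) (rshift n i) (Vk k).
Proof.
move=> r rw ru; rewrite /Vk raddf_sum big1 // => j _.
rewrite /= mcoeffX; case: eqP => // E; exfalso.
move: rw ru; rewrite -E !mnmDE !mulmnE !mnm1E eq_lrshift eq_rlshift eq_rshift eq_lshift.
case: (j == i) => /=; rewrite ?muln0 ?mul0n //.
Qed.

Lemma ZPF i B F : Zp (lshift n i) (rshift n i) (PF B F).
Proof. apply: Zp_prod => k; apply: Zp_exp; exact: ZV. Qed.

End Spec.
Section Main.
Variables (R : fieldType) (n : nat) (a : 'X_{1..n}) (B : nat).

Definition nu (s : seq 'I_n) : 'X_{1..n + n} :=
  (\sum_(i <- s) (U_(lshift n i) *+ a i + U_(rshift n i)))%MM.

Lemma nu_l s j : j \notin s -> nu s (lshift n j) = 0%N.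
Proof.
move=> js; rewrite /nu mnm_sumE big1_seq // => i /andP[_ ins].
rewrite mnmDE mulmnE !mnm1E eq_lshift eq_rlshift addn0.
by case: eqP ins js => // -> ->.
Qed.

Lemma nu_r s j : j \notin s -> nu s (rshift n j) = 0%N.
Proof.
move=> js; rewrite /nu mnm_sumE big1_seq // => i /andP[_ ins].
rewrite mnmDE mulmnE !mnm1E eq_rshift eq_lrshift mul0n add0n.
by case: eqP ins js => // -> ->.
Qed.

Lemma base_case F :
  (PF R n B F)@_(nu [::]) = ([forall k : 'I_B, F k == 0%N])%:R.
Proof.
have HO : forall m1 m2 : 'X_{1..n+n}, (m1 + m2 == 0)%MM -> (m1 == 0)%MM.
  by move=> m1 m2; rewrite mnmD_eq0 => /andP[].
have ag : agree (fun m => m == 0%MM) (PF R n B F) (\prod_(k < B) (0 : {mpoly R[n+n]}) ^+ F k).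
  apply: (@agree_prod _ _ (fun m => m == 0%MM) HO) => k.
  apply: (@agree_exp _ _ (fun m => m == 0%MM) HO) => m /eqP ->.
  rewrite mcoeff0 /Vk raddf_sum big1 //= => j _; rewrite mcoeffX.
  case: eqP => // /mnmP /(_ (rshift n j)).
  by rewrite mnmDE mulmnE !mnm1E eqxx eq_lrshift mnm0E.
have -> : nu [::] = 0%MM by rewrite /nu big_nil.
rewrite ag ?eqxx //.
case: (boolP [forall k : 'I_B, F k == 0%N]) => [/forallP h|].
  by rewrite big1 ?mcoeff1 ?eqxx // => k _; rewrite (eqP (h k)) expr0.
rewrite negb_forall => /existsP[k hk].
by rewrite (bigD1 k) //= expr0n (negbTE hk) mul0r mcoeff0.
Qed.

Lemma claim (s : seq 'I_n) : uniq s -> (forall i, i \in s -> (a i < B)%N) ->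
  forall F, (PF R n B F)@_(nu s) =
   ([forall k : 'I_B, F k == Ms (map a s) k])%:R * (Kc (map a s))%:R.
Proof.
elim: s => [|i s IH] Hu Ha F.
  by rewrite base_case mulr1.
move: Hu => /= /andP[nis Hu].
pose mu := (U_(lshift n i) *+ a i + nu s)%MM.
have Enu : nu (i :: s) = (mu + U_(rshift n i))%MM.
  apply/mnmP => t; rewrite /mu /nu big_cons !mnmDE.
  by rewrite addnAC.
have mu_e : mu (rshift n i) = 0%N.
  by rewrite /mu mnmDE mulmnE mnm1E eq_lrshift nu_r.
have mu_x : mu (lshift n i) = a i.
  by rewrite /mu mnmDE mulmnE mnm1E eqxx nu_l //= mul1n addn0.
have coefXQ : forall (k : nat) G,
    ('X_[(U_(lshift n i) *+ k)%MM] * PF R n B G)@_mu =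
    (k == a i)%:R * (PF R n B G)@_(nu s).
  move=> k G; rewrite mulrC.
  case: (ltngtP k (a i)) => hk.
  - have -> : mu = (U_(lshift n i) *+ k + (U_(lshift n i) *+ (a i - k) + nu s))%MM.
      apply/mnmP => t; rewrite /mu !mnmDE !mulmnE addnA -mulnDr subnKC //.
      exact: ltnW.
    rewrite mcoeffMX mul0r.
    apply: (@ZPF R n i).
      by rewrite mnmDE mulmnE mnm1E eq_lrshift (nu_r nis) /= mul0n.
    by rewrite mnmDE mulmnE mnm1E eqxx /= mul1n (nu_l nis) addn0 subn_gt0.
  - rewrite [X in _ = X]mul0r mcoeffM big1 // => kk /eqP E.
    rewrite mcoeffX; case: eqP; last by rewrite mulr0.
    move=> E2; exfalso.
    have : mu (lshift n i) = (kk.1 + kk.2)%MM (lshift n i) by rewrite -E.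
    rewrite mnmDE -E2 mulmnE mnm1E eqxx /= mul1n mu_x => h.
    by move: hk; rewrite h ltnNge leq_addl.
  - have -> : mu = (U_(lshift n i) *+ k + nu s)%MM by rewrite /mu hk.
    by rewrite mcoeffMX /= mul1r.
have Hai : (a i < B)%N by apply: Ha; rewrite mem_head.
have -> : (PF R n B F)@_(nu (i :: s)) = (PF R n B F)@_(mu + U_(rshift n i))%MM by rewrite Enu.
have hD := mcoeff_deriv (rshift n i) mu (PF R n B F).
rewrite mu_e mulr1n in hD; rewrite -hD dPF raddf_sum /=.
rewrite (bigD1 (Ordinal Hai)) //= big1 ?addr0; last first.
  move=> k hk; rewrite mcoeffMn coefXQ.
  have -> : (k == a i :> nat) = false.
    by apply/negbTE; apply: contra hk => /eqP e; apply/eqP; apply: val_inj.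
  by rewrite mul0r mul0rn.
rewrite mcoeffMn coefXQ eqxx mul1r IH //; last first.
  by move=> j js; apply: Ha; rewrite inE js orbT.
set l := map a s.
have Ms_cons : forall k, Ms (a i :: l) k = ((a i == k) + Ms l k)%N by [].
case: (boolP [forall k : 'I_B, F k == Ms (a i :: l) k]) => [/forallP h|hb].
  have -> : [forall k : 'I_B, decF F (a i) k == Ms l k].
    apply/forallP => k; rewrite /decF (eqP (h k)) Ms_cons.
    case: (eqVneq (k : nat) (a i)) => [->|nk]; first by rewrite eqxx.
    by rewrite /= add0n.
  have hF : F (a i) = (count_mem (a i) l).+1.
    by rewrite (eqP (h (Ordinal Hai))) Ms_cons eqxx.
  by rewrite /= hF !mulr1n !mul1r natrM mulr_natl.
rewrite mul0r.
case hFa : (F (a i)) => [|c]; first by rewrite mulr0n.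
case: (boolP [forall k : 'I_B, decF F (a i) k == Ms l k]) => [/forallP h|]; 
  last by rewrite mul0r mul0rn.
exfalso; move/negP: hb; apply; apply/forallP => k.
have := h k; rewrite /decF Ms_cons.
case: (eqVneq (k : nat) (a i)) => [e|nk].
  by rewrite e hFa /= => /eqP <-; rewrite eqxx.
by rewrite /= add0n.
Qed.

End Main.
Section Tsub.
Variables (R : fieldType) (n : nat).
Hypothesis hR : [pchar R] =i pred0.

Lemma coefsign (p : {mpoly R[n + n]}) i m :
  ((-1) ^+ i * p)@_m = (-1) ^+ i * p@_m.
Proof.
rewrite -signr_odd [in RHS]/= -[(-1) ^+ i]signr_odd.
by case: (odd i); rewrite /= ?expr1 ?expr0 ?mul1r ?mulN1r ?mcoeffN.
Qed.

Definition O1 (mu : 'X_{1..n + n}) := [forall j : 'I_n, mu (rshift n j) <= 1]%N.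

Lemma O1_down m1 m2 : O1 (m1 + m2)%MM -> O1 m1.
Proof.
move=> /forallP h; apply/forallP => j; move: (h j); rewrite mnmDE.
by apply: leq_trans; rewrite leq_addr.
Qed.

Lemma tsub_agree k : agree O1 (tsub R n k.+1) (Vk R n k).
Proof.
move=> mu /forallP Hmu.
rewrite /tsub mcoeffZ raddf_sum /= /Vk raddf_sum /= mulr_sumr.
apply: eq_bigr => i _.
rewrite mcoeffB exprBn raddf_sum /= big_ord_recl big_ord_recl big1 ?addr0.
  rewrite /xv /ev !mcoeffMn -!mulrA !coefsign /= subn0 subSS subn0 bin0 bin1.
  rewrite !expr0 !mul1r !mulr1 !expr1 !mpolyXn -!mpolyXD !mcoeffX.
  rewrite mulr1n mulN1r opprD addrA subrr add0r mulNrn opprK.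
  set d := (_ == mu)%:R.
  rewrite -[d *+ _]mulr_natl mulrA mulVf ?mul1r //.
  by move: hR => /pcharf0P ->.
move=> j _; rewrite !mcoeffMn.
rewrite -mulrA coefsign.
rewrite /xv /ev !mpolyXn -mpolyXD mcoeffX.
case: eqP => [E|]; last by rewrite mulr0 mul0rn.
move: (Hmu i); rewrite -E mnmDE !mulmnE !mnm1E eq_lrshift eqxx /= mul0n add0n mul1n.
by rewrite /bump /=.
Qed.

End Tsub.
Lemma split_l n (j : 'I_n) : split (lshift n j) = inl j.
Proof. exact: (unsplitK (inl _ j)). Qed.
Lemma split_r n (j : 'I_n) : split (rshift n j) = inr j.
Proof. exact: (unsplitK (inr _ j)). Qed.

Lemma mi_of_ffunE D (m : {ffun 'I_D -> 'I_D.+1}) (k : 'I_D) :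
  mi_of_ffun m k = m k.
Proof. by rewrite /mi_of_ffun valK. Qed.

Lemma xa_eps_nu n (a : 'X_{1..n}) : xa_eps a = nu a (enum 'I_n).
Proof.
apply/mnmP => t; rewrite /xa_eps mnmE -(splitK t).
case: (split t) => j /=; rewrite ?split_l ?split_r /nu mnm_sumE.
  rewrite (bigD1_seq j) ?mem_enum ?enum_uniq //= big1_seq.
    by rewrite mnmDE mulmnE !mnm1E eqxx eq_rlshift /= mul1n !addn0.
  move=> i /andP[ij _]; rewrite mnmDE mulmnE !mnm1E eq_lshift eq_rlshift.
  by rewrite (negbTE ij) mul0n.
rewrite (bigD1_seq j) ?mem_enum ?enum_uniq //= big1_seq.
  by rewrite mnmDE mulmnE !mnm1E eqxx eq_lrshift /= mul0n !addn0.
move=> i /andP[ij _]; rewrite mnmDE mulmnE !mnm1E eq_rshift eq_lrshift.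
by rewrite (negbTE ij) mul0n.
Qed.

Lemma mdeg_nu n (a : 'X_{1..n}) :
  mdeg (nu a (enum 'I_n)) = (\sum_(j < n) a j + n)%N.
Proof.
rewrite -xa_eps_nu mdegE big_split_ord /=; congr (_ + _)%N.
  by apply: eq_bigr => j _; rewrite /xa_eps mnmE ?split_l ?split_r.
by rewrite (eq_bigr (fun _ => 1%N)) ?sum1_card ?card_ord // => j _;
  rewrite /xa_eps mnmE ?split_l ?split_r.
Qed.

Theorem proposition4p10 (R : fieldType) (hR : [pchar R] =i pred0)
    (n : nat) (hn : (0 < n)%N) (tau : fps R) (a : 'X_{1..n}) :
  W tau a = tau_subst tau (xa_eps a).
Proof.
set s := map a (enum 'I_n).
have -> : W tau a = (Kc s)%:R * tau (Ms s).
  by rewrite /W /fps_at0 -(foldr_map a (fun k g => fps_deriv k g)) -/(Dl _ _) Dl_at0.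
rewrite /tau_subst xa_eps_nu.
set D := mdeg _.
have hD : D = (\sum_(j < n) a j + n)%N by rewrite /D mdeg_nu.
have aD : forall i, (a i < D)%N.
  move=> i; rewrite hD (bigD1 i) //= -addnA -{1}[a i]addn0 ltn_add2l.
  by rewrite addn_gt0 hn orbT.
have MsD : forall k, (Ms s k < D.+1)%N.
  move=> k; rewrite ltnS hD (leq_trans _ (leq_addl _ _)) //.
  by rewrite /Ms (leq_trans (count_size _ _)) // size_map size_enum_ord.
have MsD0 : forall t, (D <= t)%N -> Ms s t = 0%N.
  move=> t Dt; apply/count_memPn/mapP => -[i _ ti].
  by move: (aD i); rewrite -ti ltnNge Dt.
have term : forall m : {ffun 'I_D -> 'I_D.+1},
   (\prod_(k < D) tsub R n k.+1 ^+ m k)@_(nu a (enum 'I_n)) =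
   ([forall k : 'I_D, mi_of_ffun m k == Ms s k])%:R * (Kc s)%:R.
  move=> m; rewrite -(@claim R n a D (enum 'I_n) (enum_uniq _) (fun i _ => aD i) (mi_of_ffun m)).
  rewrite /PF; apply: (@agree_prod _ _ (@O1 n) (@O1_down n) _ (index_enum 'I_D)
    (fun k : 'I_D => tsub R n k.+1 ^+ m k) (fun k : 'I_D => Vk R n k ^+ mi_of_ffun m k)) => [k|].
    rewrite mi_of_ffunE; apply: (@agree_exp _ _ (@O1 n) (@O1_down n)).
    exact: tsub_agree.
  by apply/forallP => j; rewrite -(xa_eps_nu a) /xa_eps mnmE split_r.
pose m0 : {ffun 'I_D -> 'I_D.+1} := [ffun k : 'I_D => inord (Ms s k) : 'I_D.+1].
have m0E : forall k : 'I_D, (m0 k : nat) = Ms s k by move=> k; rewrite ffunE inordK.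
have mim0 : mi_of_ffun m0 = Ms s.
  apply: functional_extensionality => t.
  case: (ltnP t D) => tD.
    by rewrite -[t]/(nat_of_ord (Ordinal tD)) mi_of_ffunE m0E.
  by rewrite /mi_of_ffun insubN ?MsD0 // -leqNgt.
rewrite (bigD1 m0) //= [X in _ + X]big1 ?addr0; last first.
  move=> m mm0; rewrite term.
  case: (boolP [forall k : 'I_D, mi_of_ffun m k == Ms s k]) => [/forallP h|_].
    exfalso; move/negP: mm0; apply; apply/eqP/ffunP => k; apply: val_inj.
    by rewrite /= m0E -mi_of_ffunE (eqP (h k)).
  by rewrite /= mul0r mulr0.
rewrite term.
have -> : [forall k : 'I_D, mi_of_ffun m0 k == Ms s k].
  by apply/forallP => k; rewrite mi_of_ffunE m0E.
by rewrite mim0 /= mulr1n mul1r mulrC.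
Qed.
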